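(* Let $u,v$ be homogeneous elements of $\mathfrak{B}(V)$ with $\mu(u)\cap\mu(v)=\emptyset$. If $uv=0$, then $u=0$ or $v=0$.
   Context: $V$ is a braided vector space of diagonal type over an algebraically closed field of characteristic $0$ with basis $x_1,\dots,x_n$ and braiding $C(x_i\otimes x_j)=q_{ij}x_j\otimes x_i$; $\mathfrak{B}(V)$ is its Nichols algebra, $\mathbb{Z}^n$-graded with $\deg x_i=e_i$. For a homogeneous element $w$ with $\deg w=\sum_i\lambda_ie_i$, $\mu(w):=\{x_i:\lambda_i>0\}$. *)

(* Defs.v *)
From HB Require Import structures.
From mathcomp Require Import all_boot all_order all_algebra.
Set Implicit Arguments. Unset Strict Implicit. Unset Printing Implicit Defensive.
Import GRing.Theory.
Local Open Scope ring_scope.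

(* Braided vector space of diagonal type with basis x_0..x_(n-1) and braiding
   c(x_i (x) x_j) = q i j x_j (x) x_i.  T(V) is the free algebra on the x_i;
   a word [:: i1; ...; ik] stands for x_i1 ... x_ik. *)
Definition word (n : nat) := seq 'I_n.

(* An element of T(V): a finite formal linear combination of words. *)
Definition tensor (K : fieldType) (n : nat) := seq (K * word n).

Definition coef (K : fieldType) n (u : tensor K n) (w : word n) : K :=
  \sum_(p <- u | p.2 == w) p.1.

Definition tmul (K : fieldType) n (u v : tensor K n) : tensor K n :=
  [seq (p.1 * r.1, p.2 ++ r.2) | p <- u, r <- v].

Definition rem_at (T : Type) (j : nat) (s : seq T) := take j s ++ drop j.+1 s.

(* symc q a w = coefficient of the word w in Omega(a), where Omega is the
   quantum symmetrizer, computed by the standard recursion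
   Omega_k = (id (x) Omega_(k-1)) (1 + c_1 + c_1 c_2 + ... + c_1...c_(k-1)),
   i.e. Omega(x_a1..x_ak) = sum_j (prod_(l<j) q a_l a_j) x_aj Omega(a minus a_j). *)
Fixpoint symc (K : fieldType) n (q : 'I_n -> 'I_n -> K) (a w : word n) : K :=
  match w with
  | [::] => (nilp a)%:R
  | b :: w' =>
      \sum_(j < size a | nth b a j == b)
        (\prod_(l < j) q (nth b a l) (nth b a j)) * symc q (rem_at j a) w'
  end.

(* u represents 0 in the Nichols algebra B(V) = T(V)/ker(Omega) *)
Definition nichols_zero (K : fieldType) n (q : 'I_n -> 'I_n -> K)
  (u : tensor K n) : Prop :=
  forall w : word n, \sum_(p <- u) p.1 * symc q p.2 w = 0.

Definition mdeg n (w : word n) (i : 'I_n) : nat := count_mem i w.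

Definition homogeneous (K : fieldType) n (u : tensor K n) (d : 'I_n -> nat) : Prop :=
  forall w : word n, coef u w != 0 -> forall i, mdeg w i = d i.

Definition mu n (d : 'I_n -> nat) : pred 'I_n := fun i => (0 < d i)%N.

(* Main.v *)
Require Import Defs.
From HB Require Import structures.
From mathcomp Require Import all_boot all_order all_algebra.
From Stdlib Require Import Classical.
Import GRing.Theory.
Local Open Scope ring_scope.
Section S.
Variables (K : fieldType) (n : nat) (q : 'I_n -> 'I_n -> K).

Lemma rem_sub (j : nat) (a : word n) x : x \in rem_at j a -> x \in a.
Proof. by rewrite /rem_at mem_cat => /orP [/mem_take|/mem_drop]. Qed.

Lemma rem_in (j : nat) (a : word n) x y : (j < size a)%N -> x \in a -> x != nth y a j -> x \in rem_at j a.
Proof.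
move=> hj xa xn; move: xa; rewrite -{1}(cat_take_drop j a) (drop_nth y) // mem_cat in_cons.
by rewrite (negbTE xn) /rem_at mem_cat.
Qed.

Lemma symc0_l x (a w : word n) : x \in a -> x \notin w -> symc q a w = 0.
Proof.
elim: w a => [|b w IH] a xa xw /=.
  by case: a xa => //= y a _; rewrite mulr0n.
rewrite in_cons negb_or in xw; case/andP: xw => xb xw.
apply: big1 => j /eqP hj; rewrite (IH _ _ xw) ?mulr0 //.
by apply: (@rem_in j a x b (ltn_ord j) xa); rewrite hj.
Qed.

Lemma symc0_r x (a w : word n) : x \in w -> x \notin a -> symc q a w = 0.
Proof.
elim: w a => [|b w IH] a //= xw xa.
rewrite in_cons in xw; case/orP: xw => [/eqP xb | xw].
  apply: big1 => j /eqP hj; exfalso; move/negP: xa; apply.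
  by rewrite xb -hj mem_nth.
apply: big1 => j _; rewrite (IH _ xw) ?mulr0 //.
by apply/negP => /rem_sub; rewrite (negbTE xa).
Qed.

Lemma rem_at_cat (j : nat) (a b : word n) : (j < size a)%N -> rem_at j (a ++ b) = rem_at j a ++ b.
Proof.
move=> hj; rewrite /rem_at take_cat hj /= drop_cat; case: ltnP => h; first by rewrite -catA.
have e : j.+1 = size a by apply: anti_leq; rewrite hj h.
by rewrite e subnn drop0 drop_size cats0.
Qed.

Lemma sum_ord_nat m (P : pred nat) (F : nat -> K) :
  \sum_(j < m | P j) F j = \sum_(0 <= j < m | P j) F j.
Proof. by rewrite big_mkord. Qed.

Lemma symc_cons (a : word n) c w : symc q a (c :: w) =
  \sum_(j < size a | nth c a j == c)
        (\prod_(l < j) q (nth c a l) (nth c a j)) * symc q (rem_at j a) w.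
Proof. by []. Qed.

Lemma symc_cat (P : pred 'I_n) (a b w1 w2 : word n) : all P a -> all P w1 ->
  all (predC P) b -> all (predC P) w2 ->
  symc q (a ++ b) (w1 ++ w2) = symc q a w1 * symc q b w2.
Proof.
elim: w1 a => [|c w1 IH] a Pa Pw1 Pb Pw2.
  rewrite /=.
  case: a Pa => [|y a] Pa /=; first by rewrite mulr1n mul1r.
  rewrite mulr0n mul0r (@symc0_l y) ?mem_head //.
  apply/negP => yw; move/allP: Pw2 => /(_ _ yw) /=; case/andP: Pa => -> //.
case/andP: Pw1 => Pc Pw1.
rewrite cat_cons !symc_cons.
rewrite -(big_mkord (fun j => nth c (a ++ b) j == c) (fun j => (\prod_(l < j) q (nth c (a ++ b) l) (nth c (a ++ b) j)) * symc q (rem_at j (a ++ b)) (w1 ++ w2))).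
rewrite -(big_mkord (fun j => nth c a j == c) (fun j => (\prod_(l < j) q (nth c a l) (nth c a j)) * symc q (rem_at j a) w1)).
rewrite size_cat (@big_cat_nat _ _ _ (size a) 0 (size a + size b) _ _ (leq0n _) (leq_addr _ _)) /=.
rewrite [X in _ + X]big1_seq ?addr0; last first.
  move=> j /andP [hc]; rewrite mem_index_iota => /andP [h1 h2].
  exfalso; move: hc; rewrite nth_cat ltnNge h1 /=.
  have : nth c b (j - size a) \in b by rewrite mem_nth // ltn_subLR.
  move/allP: Pb => Pb /Pb /= hb /eqP hbc; move: hb; by rewrite hbc Pc.
rewrite big_distrl /=; apply: congr_big_nat => // [j /andP [_ hj]|j /andP [_ /andP [_ hj]]].
  by rewrite nth_cat hj.
rewrite rem_at_cat // (IH _ _ Pw1 Pb Pw2); last first.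
  by apply/allP => x /rem_sub; move/allP: Pa; apply.
rewrite mulrA; congr (_ * _ * _).
rewrite nth_cat hj; apply: eq_bigr => l _.
by rewrite nth_cat (ltn_trans (ltn_ord l) hj).
Qed.

Lemma group (u : tensor K n) (F : word n -> K) :
  \sum_(p <- u) p.1 * F p.2 = \sum_(w <- undup [seq p.2 | p <- u]) coef u w * F w.
Proof.
rewrite /coef.
transitivity (\sum_(w <- undup [seq p.2 | p <- u]) \sum_(p <- u) (if p.2 == w then p.1 * F p.2 else 0)); last first.
  apply: eq_bigr => w _; rewrite big_distrl [RHS]big_mkcond /=; apply: eq_bigr => p _.
  by case: eqP => [->|]; rewrite ?mul0r.
rewrite exchange_big /=; apply: eq_big_seq => p pu.
have pin : p.2 \in undup [seq p.2 | p <- u].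
  by rewrite mem_undup; apply: map_f.
rewrite (big_rem _ pin) /= eqxx big1_seq ?addr0 // => w /andP [_ hw].
case: eqP => // e; exfalso; move: hw; rewrite -e mem_rem_uniqF ?undup_uniq //.
Qed.

Lemma restrict (u : tensor K n) (F : word n -> K) (P : pred (word n)) :
  (forall w, coef u w != 0 -> P w) ->
  \sum_(p <- u) p.1 * F p.2 = \sum_(p <- u | P p.2) p.1 * F p.2.
Proof.
move=> hP; rewrite [RHS]big_mkcond /=.
transitivity (\sum_(p <- u) p.1 * (if P p.2 then F p.2 else 0)); last first.
  by apply: eq_bigr => p _; case: (P p.2); rewrite ?mulr0.
rewrite (group u F) (group u (fun w => if P w then F w else 0)); apply: eq_bigr => w _.
case hw: (P w) => //; have [->|/hP] := eqVneq (coef u w) 0; first by rewrite !mul0r.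
by rewrite hw.
Qed.
End S.

Lemma hom_all (K : fieldType) n (u : tensor K n) d w :
  homogeneous u d -> coef u w != 0 -> all (mu d) w.
Proof.
move=> hu hw; apply/allP => i iw; rewrite /mu -(hu w hw i) /mdeg -has_count.
by rewrite has_pred1.
Qed.

Lemma nz_all (K : fieldType) n (q : 'I_n -> 'I_n -> K) (u : tensor K n) (A : pred 'I_n) w :
  (forall w, coef u w != 0 -> all A w) ->
  \sum_(p <- u) p.1 * symc q p.2 w != 0 -> all A w.
Proof.
move=> hA; rewrite (@restrict _ _ _ (fun x => symc q x w) (fun w => all A w) hA).
apply: contraR => /allPn [x xw xA].
apply/eqP; apply: big1 => p pA; rewrite (@symc0_r _ _ q x) ?mulr0 //.
by apply/negP => /(allP pA) h; rewrite h in xA.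
Qed.

Theorem lemma5p3 (K : closedFieldType) (hK : [pchar K] =i pred0) (n : nat)
  (q : 'I_n -> 'I_n -> K) (hq : forall i j, q i j != 0)
  (u v : tensor K n) (du dv : 'I_n -> nat)
  (hu : homogeneous u du) (hv : homogeneous v dv)
  (hdisj : forall i : 'I_n, ~~ (mu du i && mu dv i))
  (huv : nichols_zero q (tmul u v)) :
  nichols_zero q u \/ nichols_zero q v.
Proof.
destruct (classic (nichols_zero q u)) as [h|hnu]; [by left|].
destruct (classic (nichols_zero q v)) as [h|hnv]; [by right|].
exfalso.
have [w1 hw1] := not_all_ex_not _ _ hnu.
have [w2 hw2] := not_all_ex_not _ _ hnv.
move/eqP: hw1 => hw1; move/eqP: hw2 => hw2.
have hA : forall w, coef u w != 0 -> all (mu du) w by move=> w; apply: hom_all.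
have hB' : forall w, coef v w != 0 -> all (mu dv) w by move=> w; apply: hom_all.
have sub : forall w, all (mu dv) w -> all (predC (mu du)) w.
  move=> w /allP h; apply/allP => i /h hi /=; move: (hdisj i); by rewrite hi andbT.
have hB : forall w, coef v w != 0 -> all (predC (mu du)) w by move=> w /hB' /sub.
have A1 := @nz_all _ _ q u _ w1 hA hw1.
have B1 := @nz_all _ _ q v _ w2 hB hw2.
set W := w1 ++ w2.
have := huv W; rewrite /tmul.
rewrite (@big_allpairs_dep _ _ _ _ _ _ (fun (p r : K * word n) => (p.1 * r.1, p.2 ++ r.2)) u (fun _ => v)
  (fun x => x.1 * symc q x.2 W)) /=.
move=> E; move: (mulf_neq0 hw1 hw2); rewrite -[X in X * _ != _]/(\sum_(p <- u) p.1 * symc q p.2 w1).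
set L := _ * _; suff -> : L = \sum_(i1 <- u) \sum_(i2 <- v) i1.1 * i2.1 * symc q (i1.2 ++ i2.2) W by rewrite E eqxx.
rewrite /L.
rewrite (@restrict _ _ _ (fun w => symc q w w1) (fun w => all (mu du) w) hA) (@restrict _ _ _ (fun w => symc q w w2) (fun w => all (predC (mu du)) w) hB).
rewrite big_distrlr.
transitivity (\sum_(p <- u) p.1 * (\sum_(r <- v | all (predC (mu du)) r.2) r.1 * symc q (p.2 ++ r.2) W)).
  rewrite [RHS](@restrict _ _ _ (fun w => \sum_(r <- v | all (predC (mu du)) r.2) r.1 * symc q (w ++ r.2) W) (fun w => all (mu du) w) hA).
  apply: eq_bigr => p Ap; rewrite big_distrr; apply: eq_bigr => r Br.
  rewrite /W (@symc_cat _ _ q (mu du)) //.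
  change (p.1 * symc q p.2 w1 * (r.1 * symc q r.2 w2) = p.1 * (r.1 * (symc q p.2 w1 * symc q r.2 w2))).
  by rewrite -!mulrA; congr (_ * _); rewrite mulrCA.
apply: eq_bigr => p _.
rewrite big_distrr /=.
rewrite [RHS](eq_bigr (fun r => r.1 * (p.1 * symc q (p.2 ++ r.2) W))); last first.
  by move=> r _; rewrite mulrCA mulrA.
rewrite (@restrict _ _ _ (fun w => p.1 * symc q (p.2 ++ w) W) (fun w => all (predC (mu du)) w) hB).
by apply: eq_bigr => r _; rewrite mulrCA.
Qed.
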